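(* Let $M$ be a commutative and cocommutative Hopf algebra over $\mathbb{C}$ and $A$ a commutative $\mathbb{C}$-algebra. Each map $\mathrm{EQ}_r$ (for $r$ an $A$-valued bicharacter on $M$) is invertible, with inverse $\mathrm{EQ}_{r^{-1}}$. Moreover, if $r_1,r_2$ are $A$-valued bicharacters on $M$ with symmetrizations $s_1,s_2$ respectively, then \[ \mathrm{EQ}_{r_2}\circ\mathrm{EQ}_{r_1^{-1}}\colon (M_A,\bullet_{s_1})\to (M_A,\bullet_{s_2}) \] is a homomorphism from the multiplication $\bullet_{s_1}$ to the multiplication $\bullet_{s_2}$.
   Context: For a Hopf algebra $M$ with coproduct $\Delta$, counit $\eta$ and antipode $S$, Sweedler notation is used: $\Delta(a)=\sum a'\otimes a''$, $\Delta^2(a)=\sum a'\otimes a''\otimes a'''$. An $A$-valued bicharacter on $M$ is a linear map $r:M\otimes M\to A$ such that for all $a,b,c\in M$: $r(1\otimes a)=\eta(a)=r(a\otimes 1)$, $r(ab\otimes c)=\sum r(a\otimes c')r(b\otimes c'')$, $r(a\otimes bc)=\sum r(a'\otimes b)r(a''\otimes c)$. Convolution: $(r\circ t)(a\otimes b)=\sum r(a'\otimes b')t(a''\otimes b'')$; $r^t(a\otimes b)=r(b\otimes a)$; the inverse bicharacter is $r^{-1}(a\otimes b)=r(S(a)\otimes b)$. The symmetrization of $r$ is $s=r\circ r^t$. $M_A=M\otimes_{\mathbb{C}}A$. For a symmetric bicharacter $t$ (i.e. $t=t^t$), $\bullet_t$ is the $A$-bilinear product on $M_A$ extending $a\bullet_t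 b=\sum a'b'\,t(a''\otimes b'')$. The map $\mathrm{EQ}_r(m)=\sum r(m'\otimes m'')m'''$ is extended $A$-linearly to $M_A\to M_A$. *)

(* Defs.v *)
From HB Require Import structures.
From mathcomp Require Import all_boot all_order all_algebra.
From mathcomp Require Import complex.
From mathcomp Require Import Rstruct.
Set Implicit Arguments. Unset Strict Implicit. Unset Printing Implicit Defensive.
Import Order.TTheory GRing.Theory Num.Theory.
Local Open Scope ring_scope.

Definition Cplx : fieldType := (Rdefinitions.R)[i].

Section Hopf.
Variable K : fieldType.

Definition lin (U V : lmodType K) (f : U -> V) : Prop :=
  forall (c : K) (x y : U), f (c *: x + y) = c *: f x + f y.

Definition bilin (U W V : lmodType K) (f : U -> W -> V) : Prop :=
  (forall y, lin (fun x => f x y)) /\ (forall x, lin (f x)).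

Definition trilin (U W X V : lmodType K) (f : U -> W -> X -> V) : Prop :=
  (forall y z, lin (fun x => f x y z)) /\ (forall x z, lin (fun y => f x y z))
  /\ (forall x y, lin (f x y)).

(* An element of U (x)_K W is represented by a finite list of pure tensors
   [:: (x_1, y_1); ...] standing for sum_i x_i (x) y_i.  Two representatives
   denote the same tensor iff they agree on every bilinear map to every
   K-module (universal property of the tensor product). *)
Definition tens_eq (U W : lmodType K) (t1 t2 : seq (U * W)) : Prop :=
  forall (V : lmodType K) (f : U -> W -> V), bilin f ->
    \sum_(p <- t1) f p.1 p.2 = \sum_(p <- t2) f p.1 p.2.

Variable M : comAlgType K.

(* Sweedler sum  sum f(a', a'')  for a coproduct  cop : M -> M (x) M
   given on representatives. *)
Definition swe (cop : M -> seq (M * M)) (V : lmodType K) (f : M -> M -> V) (a : M) : V :=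
  \sum_(p <- cop a) f p.1 p.2.

Record cc_hopf (cop : M -> seq (M * M)) (eps : M -> K) (S : M -> M) : Prop := {
  cop_lin : forall (V : lmodType K) (f : M -> M -> V), bilin f ->
      forall (c : K) (a b : M), swe cop f (c *: a + b) = c *: swe cop f a + swe cop f b;
  cop_coassoc : forall (V : lmodType K) (f : M -> M -> M -> V), trilin f ->
      forall a : M,
      swe cop (fun x y => swe cop (fun u v => f u v y) x) a =
      swe cop (fun x y => swe cop (fun u v => f x u v) y) a;
  eps_lin : forall (c : K) (a b : M), eps (c *: a + b) = c * eps a + eps b;
  cop_counitl : forall a : M, swe cop (fun x y => eps x *: y) a = a;
  cop_counitr : forall a : M, swe cop (fun x y => eps y *: x) a = a;
  cop_mul : forall (V : lmodType K) (f : M -> M -> V), bilin f ->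
      forall a b : M,
      swe cop f (a * b) =
      swe cop (fun a1 a2 => swe cop (fun b1 b2 => f (a1 * b1) (a2 * b2)) b) a;
  cop_one : forall (V : lmodType K) (f : M -> M -> V), bilin f ->
      swe cop f 1 = f 1 1;
  eps_mul : forall a b : M, eps (a * b) = eps a * eps b;
  eps_one : eps 1 = 1;
  S_lin : lin S;
  S_antipodel : forall a : M, swe cop (fun x y => S x * y) a = (eps a)%:A;
  S_antipoder : forall a : M, swe cop (fun x y => x * S y) a = (eps a)%:A;
  cop_cocomm : forall (V : lmodType K) (f : M -> M -> V), bilin f ->
      forall a : M, swe cop f a = swe cop (fun x y => f y x) a
}.

Variable cop : M -> seq (M * M).
Variable eps : M -> K.
Variable S : M -> M.
Variable A : comAlgType K.

(* A-valued bicharacter on M: a linear map r : M (x) M -> A, given as a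
   bilinear map M -> M -> A. *)
Definition bichar (r : M -> M -> A) : Prop :=
  [/\ bilin r,
      forall a : M, r 1 a = (eps a)%:A /\ r a 1 = (eps a)%:A,
      forall a b c : M, r (a * b) c = swe cop (fun c1 c2 => r a c1 * r b c2) c
    & forall a b c : M, r a (b * c) = swe cop (fun a1 a2 => r a1 b * r a2 c) a].

Definition conv (r t : M -> M -> A) : M -> M -> A :=
  fun a b => swe cop (fun a1 a2 => swe cop (fun b1 b2 => r a1 b1 * t a2 b2) b) a.

Definition transp (r : M -> M -> A) : M -> M -> A := fun a b => r b a.

Definition binv (r : M -> M -> A) : M -> M -> A := fun a b => r (S a) b.

Definition symz (r : M -> M -> A) : M -> M -> A := conv r (transp r).

(* Elements of M_A = M (x)_K A are represented by seq (M * A). *)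

(* m .t n = sum m'n' t(m'' (x) n''), extended A-bilinearly *)
Definition bullet (t : M -> M -> A) (u v : seq (M * A)) : seq (M * A) :=
  flatten [seq flatten [seq flatten [seq
      [seq (x.1 * y.1, t x.2 y.2 * (p.2 * q.2)) | y <- cop q.1]
    | x <- cop p.1] | q <- v] | p <- u].

(* EQ_r(m) = sum r(m' (x) m'') m''', with Delta^2 = (Delta (x) id) Delta,
   extended A-linearly *)
Definition EQ (r : M -> M -> A) (u : seq (M * A)) : seq (M * A) :=
  flatten [seq flatten [seq
      [seq (x.2, r y.1 y.2 * p.2) | y <- cop x.1]
    | x <- cop p.1] | p <- u].

End Hopf.

(* Main.v *)
Require Import Defs.
From HB Require Import structures.
From mathcomp Require Import all_boot all_order all_algebra.
Set Implicit Arguments. Unset Strict Implicit. Unset Printing Implicit Defensive.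
Import GRing.Theory.
From mathcomp Require Import ring.
From Stdlib Require Import FunctionalExtensionality.
Local Open Scope ring_scope.

Section Gen.
Variable K : fieldType.

Lemma lin0 (U V : lmodType K) (f : U -> V) : lin f -> f 0 = 0.
Proof.
move=> Hf; have H := Hf 1 0 0; rewrite scale1r addr0 scale1r in H.
by apply: (addrI (f 0)); rewrite addr0 -H.
Qed.

Lemma linD (U V : lmodType K) (f : U -> V) : lin f -> forall x y, f (x + y) = f x + f y.
Proof. by move=> Hf x y; have := Hf 1 x y; rewrite !scale1r. Qed.

Lemma linZ (U V : lmodType K) (f : U -> V) : lin f -> forall c x, f (c *: x) = c *: f x.
Proof. by move=> Hf c x; have := Hf c x 0; rewrite !addr0 (lin0 Hf) addr0. Qed.

Lemma lin_sum (U V : lmodType K) (f : U -> V) (I : Type) (s : seq I) (F : I -> U) :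
  lin f -> f (\sum_(i <- s) F i) = \sum_(i <- s) f (F i).
Proof.
move=> Hf; elim: s => [|i s IH]; first by rewrite !big_nil (lin0 Hf).
by rewrite !big_cons (linD Hf) IH.
Qed.

Lemma lin_id (U : lmodType K) : lin (fun x : U => x).
Proof. by []. Qed.

Lemma lin_comp (U W V : lmodType K) (g : U -> W) (h : W -> V) :
  lin g -> lin h -> lin (fun x => h (g x)).
Proof. by move=> Hg Hh c x y; rewrite Hg Hh. Qed.

Lemma lin_sumF (U V : lmodType K) (I : Type) (s : seq I) (F : I -> U -> V) :
  (forall i, lin (F i)) -> lin (fun x => \sum_(i <- s) F i x).
Proof.
move=> HF c x y; elim: s => [|i s IH]; first by rewrite !big_nil scaler0 addr0.
by rewrite !big_cons HF IH scalerDr addrACA.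
Qed.

Lemma lin_mull (R : comAlgType K) (d : R) : lin (fun x : R => x * d).
Proof. by move=> c x y; rewrite mulrDl scalerAl. Qed.

Lemma lin_mulr (R : comAlgType K) (d : R) : lin (fun x : R => d * x).
Proof. by move=> c x y; rewrite mulrDr scalerAr. Qed.

Lemma lin_mulr' (R : comAlgType K) (d : R) : lin ( *%R d).
Proof. exact: lin_mulr. Qed.

End Gen.

Section Core.
Variable K : fieldType.
Variable M : comAlgType K.
Variables (cop : M -> seq (M * M)) (eps : M -> K) (S : M -> M).
Hypothesis HM : cc_hopf cop eps S.
Variable A : comAlgType K.

Local Notation D := (swe cop).

Lemma D_push (V W : lmodType K) (h : V -> W) (g : M -> M -> V) a :
  lin h -> h (D g a) = D (fun x y => h (g x y)) a.
Proof. by move=> Hh; rewrite /swe (lin_sum _ _ Hh). Qed.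

Lemma D_ext (V : lmodType K) (g g' : M -> M -> V) a :
  (forall x y, g x y = g' x y) -> D g a = D g' a.
Proof. by move=> H; apply: eq_bigr => p _; apply: H. Qed.

Lemma D_exch (V : lmodType K) (F : M -> M -> M -> M -> V) a b :
  D (fun x y => D (fun u v => F x y u v) b) a = D (fun u v => D (fun x y => F x y u v) a) b.
Proof. by rewrite /swe exchange_big. Qed.

Lemma lin_D (V : lmodType K) (g : M -> M -> V) : bilin g -> lin (D g).
Proof. by move=> Hg c x y; rewrite (cop_lin HM Hg). Qed.

Lemma lin_Df (U V : lmodType K) (G : U -> M -> M -> V) a :
  (forall u v, lin (fun x => G x u v)) -> lin (fun x => D (G x) a).
Proof.
move=> HG c x y; rewrite /swe.
elim: (cop a) => [|p s IH]; first by rewrite !big_nil scaler0 addr0.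
by rewrite !big_cons HG IH scalerDr addrACA.
Qed.

Ltac linT :=
  cbv beta;
  first
  [ exact: lin_id
  | solve [ match goal with H : _ |- _ => apply H end ]
  | match goal with
    | |- lin (fun x => swe _ (@?G x) ?a) => apply: (@lin_Df _ _ G a); intros ??; linT
    | |- lin (swe _ ?g) => apply: lin_D; split; intros ?; linT
    | |- lin (fun x => swe _ ?g x) => apply: lin_D; split; intros ?; linT
    | |- lin S => exact: (S_lin HM)
    | |- lin (fun x => ?h x) => change (lin h); linT
    | |- lin (fun x => x * ?c) => exact: lin_mull
    | |- lin (fun x => ?c * x) => exact: lin_mulr
    | |- lin ( *%R ?d) => exact: lin_mulr
    | |- lin (fun x => ?F x ?c) => match goal with H : bilin F |- _ => exact: (proj1 H c) end
    | |- lin (fun x => ?F ?c x) => match goal with H : bilin F |- _ => exact: (proj2 H c) end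
    | |- lin (?F ?c) => match goal with H : bilin F |- _ => exact: (proj2 H c) end
    | |- lin (fun x => ?h (@?E x)) =>
        lazymatch E with (fun x => x) => fail | _ => idtac end;
        apply: (@lin_comp _ _ _ _ E h); linT
    | |- lin (fun x => ?F (@?E x) ?c) =>
        lazymatch E with (fun x => x) => fail | _ => idtac end;
        apply: (@lin_comp _ _ _ _ E (fun y => F y c)); linT
    end ].

Ltac bilinT := split; intros ?; linT.
Ltac trilinT := split; [|split]; intros ??; linT.

Lemma cocomm (V : lmodType K) (g : M -> M -> V) a :
  bilin g -> D g a = D (fun x y => g y x) a.
Proof. move=> Hg; exact: (cop_cocomm HM Hg). Qed.

Lemma coassoc (V : lmodType K) (g : M -> M -> M -> V) a : trilin g ->
  D (fun x y => D (fun u v => g u v y) x) a = D (fun x y => D (fun u v => g x u v) y) a.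
Proof. move=> Hg; exact: (cop_coassoc HM Hg). Qed.

Lemma swap12_3 (V : lmodType K) (g : M -> M -> M -> V) a : trilin g ->
  D (fun x y => D (fun u v => g x u v) y) a = D (fun x y => D (fun u v => g u x v) y) a.
Proof.
move=> [H1 [H2 H3]].
rewrite -coassoc; last by trilinT.
rewrite -[RHS]coassoc; last by trilinT.
by apply: D_ext => w v; rewrite cocomm //; bilinT.
Qed.

Definition ql (V : lmodType K) (g : M -> M -> M -> M -> V) :=
  [/\ forall b c d, lin (fun a => g a b c d), forall a c d, lin (fun b => g a b c d),
      forall a b d, lin (fun c => g a b c d) & forall a b c, lin (g a b c)].

Definition B4 (V : lmodType K) (g : M -> M -> M -> M -> V) a :=
  D (fun x y => D (fun x1 x2 => D (fun y1 y2 => g x1 x2 y1 y2) y) x) a.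
Definition R4 (V : lmodType K) (g : M -> M -> M -> M -> V) a :=
  D (fun x1 w => D (fun x2 z => D (fun x3 x4 => g x1 x2 x3 x4) z) w) a.

Lemma B4_R4 (V : lmodType K) (g : M -> M -> M -> M -> V) a : ql g -> B4 g a = R4 g a.
Proof.
case=> H1 H2 H3 H4; rewrite /B4 /R4.
rewrite (coassoc (g := fun x1 x2 y => D (fun y1 y2 => g x1 x2 y1 y2) y)) //.
split; [|split]; intros ??.
all: linT.
Qed.

Lemma B4_mid (V : lmodType K) (g : M -> M -> M -> M -> V) a : ql g ->
  B4 g a = B4 (fun x1 x2 y1 y2 => g x1 y1 x2 y2) a.
Proof.
move=> Hg; have Hg' := Hg; case: Hg' => H1 H2 H3 H4.
rewrite B4_R4 // B4_R4; last by split; intros; linT.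
rewrite /R4; apply: D_ext => x1 w.
by rewrite (swap12_3 (g := fun x2 x3 x4 => g x1 x2 x3 x4)) //; trilinT.
Qed.


Lemma B4_sw1 (V : lmodType K) (g : M -> M -> M -> M -> V) a : ql g ->
  B4 g a = B4 (fun x1 x2 y1 y2 => g x2 x1 y1 y2) a.
Proof.
case=> H1 H2 H3 H4; rewrite /B4; apply: D_ext => x y.
by rewrite cocomm //; bilinT.
Qed.

Lemma B4_sw2 (V : lmodType K) (g : M -> M -> M -> M -> V) a : ql g ->
  B4 g a = B4 (fun x1 x2 y1 y2 => g x1 x2 y2 y1) a.
Proof.
case=> H1 H2 H3 H4; rewrite /B4; apply: D_ext => x y; apply: D_ext => x1 x2.
by rewrite cocomm //; bilinT.
Qed.

Definition L4 (V : lmodType K) (g : M -> M -> M -> M -> V) a :=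
  D (fun a1 a2 => D (fun k1 k2 => D (fun i1 i2 => g i1 i2 k2 a2) k1) a1) a.

Lemma L4_B4 (V : lmodType K) (g : M -> M -> M -> M -> V) a : ql g -> L4 g a = B4 g a.
Proof.
case=> H1 H2 H3 H4; rewrite /L4 /B4.
rewrite (coassoc (g := fun k1 k2 a2 => D (fun i1 i2 => g i1 i2 k2 a2) k1)); last by trilinT.
by apply: D_ext => x y; rewrite D_exch.
Qed.

Lemma counitl (V : lmodType K) (h : M -> V) a : lin h -> D (fun x y => eps x *: h y) a = h a.
Proof.
move=> Hh; rewrite -{2}(cop_counitl HM a) (D_push _ _ Hh).
by apply: D_ext => x y; rewrite (linZ Hh).
Qed.

Lemma counitr (V : lmodType K) (h : M -> V) a : lin h -> D (fun x y => eps y *: h x) a = h a.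
Proof.
move=> Hh; rewrite -{2}(cop_counitr HM a) (D_push _ _ Hh).
by apply: D_ext => x y; rewrite (linZ Hh).
Qed.

Definition epsA (a b : M) : A := (eps a * eps b)%:A.

Lemma lin_epsA1 : lin (fun x => (eps x)%:A : A).
Proof. by move=> c x y; rewrite (eps_lin HM) scalerDl scalerA. Qed.

Lemma bilin_epsA : bilin epsA.
Proof.
rewrite /epsA; split => z c x y; rewrite (eps_lin HM).
  by rewrite mulrDl scalerDl scalerA mulrA.
by rewrite mulrDr scalerDl scalerA mulrCA.
Qed.

Lemma Q_epsA w : D epsA w = (eps w)%:A.
Proof.
rewrite /epsA -(counitl _ lin_epsA1); apply: D_ext => x y.
by rewrite scalerA.
Qed.

Lemma bichar_bilin (r : M -> M -> A) : bichar cop eps r -> bilin r.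
Proof. by case. Qed.

Lemma bilin_binv (r : M -> M -> A) : bilin r -> bilin (binv S r).
Proof. move=> Hr; rewrite /binv; bilinT. Qed.

Lemma bilin_conv (r t : M -> M -> A) : bilin r -> bilin t -> bilin (conv cop r t).
Proof. move=> Hr Ht; rewrite /conv; bilinT. Qed.

Lemma bilin_transp (r : M -> M -> A) : bilin r -> bilin (transp r).
Proof. by move=> [H1 H2]; split. Qed.

Lemma conv_binv_r (r : M -> M -> A) a b : bichar cop eps r -> conv cop r (binv S r) a b = epsA a b.
Proof.
case=> Hr Hu Hm1 Hm2; rewrite /conv /binv.
transitivity (D (fun a1 a2 => r (a1 * S a2) b) a).
  by apply: D_ext => a1 a2; rewrite Hm1.
rewrite -(D_push (h := fun z => r z b)); last by linT.
rewrite (S_antipoder HM) /epsA (linZ (proj1 Hr b) _ 1).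
by case: (Hu b) => -> _; rewrite scalerA.
Qed.


Lemma conv_binv_l (r : M -> M -> A) a b : bichar cop eps r -> conv cop (binv S r) r a b = epsA a b.
Proof.
case=> Hr Hu Hm1 Hm2; rewrite /conv /binv.
transitivity (D (fun a1 a2 => r (S a1 * a2) b) a).
  by apply: D_ext => a1 a2; rewrite Hm1.
rewrite -(D_push (h := fun z => r z b)); last by linT.
rewrite (S_antipodel HM) /epsA (linZ (proj1 Hr b) _ 1).
by case: (Hu b) => -> _; rewrite scalerA.
Qed.

Lemma conv_epsA (t : M -> M -> A) a b : bilin t -> conv cop epsA t a b = t a b.
Proof.
move=> Ht; rewrite /conv /epsA.
rewrite -[RHS](counitl (h := fun x => t x b)); last by linT.
apply: D_ext => a1 a2.
rewrite -(counitl (h := fun y => t a2 y)); last by linT.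
rewrite (D_push (h := fun z => eps a1 *: z)); last by move=> c x y; rewrite scalerDr !scalerA mulrC.
by apply: D_ext => b1 b2; rewrite mulr_algl !scalerA.
Qed.

Lemma P0gen (r t : M -> M -> A) w : bilin r -> bilin t ->
  D (fun x z => D r x * D t z) w = D (conv cop r t) w.
Proof.
move=> Hr Ht.
transitivity (B4 (fun x1 x2 z1 z2 => r x1 x2 * t z1 z2) w).
  rewrite /B4; apply: D_ext => x z.
  rewrite (D_push (h := fun c => c * D t z)); last by linT.
  apply: D_ext => x1 x2; rewrite (D_push (h := fun c => r x1 x2 * c)) //; linT.
rewrite B4_mid; last by split; intros; linT.
by [].
Qed.


Lemma EQ_sum (V : lmodType K) (h : M -> A -> V) (r : M -> M -> A) u :
  \sum_(z <- EQ cop r u) h z.1 z.2 =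
  \sum_(p <- u) D (fun x1 x2 => D (fun y1 y2 => h x2 (r y1 y2 * p.2)) x1) p.1.
Proof.
rewrite /EQ big_flatten /= big_map; apply: eq_bigr => p _.
rewrite big_flatten big_map /swe; apply: eq_bigr => x _.
by rewrite big_map.
Qed.

Lemma bullet_sum (V : lmodType K) (h : M -> A -> V) (t : M -> M -> A) u v :
  \sum_(z <- bullet cop t u v) h z.1 z.2 =
  \sum_(p <- u) \sum_(q <- v)
     D (fun x1 x2 => D (fun y1 y2 => h (x1 * y1) (t x2 y2 * (p.2 * q.2))) q.1) p.1.
Proof.
rewrite /bullet big_flatten /= big_map; apply: eq_bigr => p _.
rewrite big_flatten big_map; apply: eq_bigr => q _.
rewrite big_flatten big_map /swe; apply: eq_bigr => x _.
by rewrite big_map.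
Qed.

Lemma EQ_sumQ (V : lmodType K) (h : M -> A -> V) (r : M -> M -> A) u :
  (forall m, lin (h m)) -> bilin r ->
  \sum_(z <- EQ cop r u) h z.1 z.2 = \sum_(p <- u) D (fun x1 x2 => h x2 (D r x1 * p.2)) p.1.
Proof.
move=> Hh Hr; rewrite EQ_sum; apply: eq_bigr => p _; apply: D_ext => x1 x2.
by rewrite (D_push (h := fun c => h x2 (c * p.2))) //; linT.
Qed.

Lemma EQ_EQ_sum (V : lmodType K) (h : M -> A -> V) (r t : M -> M -> A) u :
  bilin h -> bilin r -> bilin t ->
  \sum_(z <- EQ cop t (EQ cop r u)) h z.1 z.2 =
  \sum_(p <- u) D (fun w z2 => h z2 (D (conv cop r t) w * p.2)) p.1.
Proof.
move=> Hh Hr Ht; rewrite EQ_sumQ //; last by case: Hh.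
rewrite (EQ_sumQ (h := fun m c => D (fun x1 x2 => h x2 (D t x1 * c)) m)) //; last by move=> m; linT.
apply: eq_bigr => p _.
rewrite -(coassoc (g := fun x1 z1 z2 => h z2 (D t z1 * (D r x1 * p.2)))); last by trilinT.
apply: D_ext => w z2; rewrite -P0gen //.
rewrite (D_push (h := fun c => h z2 (c * p.2))); last by linT.
by apply: D_ext => x1 z1; rewrite mulrA [D t z1 * _]mulrC.
Qed.

Lemma EQ_EQ_id (r t : M -> M -> A) u : bilin r -> bilin t ->
  (forall a b, conv cop r t a b = epsA a b) -> tens_eq (EQ cop t (EQ cop r u)) u.
Proof.
move=> Hr Ht Hc V f Hf; rewrite EQ_EQ_sum //.
apply: eq_bigr => p _.
rewrite -[RHS](counitl (h := fun y => f y p.2)); last by linT.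
apply: D_ext => w z2; rewrite (D_ext _ Hc) Q_epsA mulr_algl.
by rewrite (linZ (proj2 Hf z2)).
Qed.


Lemma B4_ext (V : lmodType K) (g g' : M -> M -> M -> M -> V) a :
  (forall x1 x2 y1 y2, g x1 x2 y1 y2 = g' x1 x2 y1 y2) -> B4 g a = B4 g' a.
Proof. by move=> H; rewrite /B4; do 3 (apply: D_ext => ? ?). Qed.

Lemma R4_ext (V : lmodType K) (g g' : M -> M -> M -> M -> V) a :
  (forall x1 x2 y1 y2, g x1 x2 y1 y2 = g' x1 x2 y1 y2) -> R4 g a = R4 g' a.
Proof. by move=> H; rewrite /R4; do 3 (apply: D_ext => ? ?). Qed.

Lemma L4_R4perm (V : lmodType K) (g : M -> M -> M -> M -> V) a : ql g ->
  L4 g a = R4 (fun q o t s => g q s o t) a.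
Proof.
move=> Hg; have Hg' := Hg; case: Hg' => H1 H2 H3 H4.
rewrite L4_B4 // B4_mid // B4_sw2; last by split; intros; linT.
by rewrite B4_R4 //; split; intros; linT.
Qed.

Lemma ML_core (V : lmodType K) (F : M -> M -> M -> M -> M -> M -> M -> M -> V) a b :
  (forall x2 x3 x4 x5 x6 x7 x8, lin (fun x => F x x2 x3 x4 x5 x6 x7 x8)) ->
  (forall x1 x3 x4 x5 x6 x7 x8, lin (fun x => F x1 x x3 x4 x5 x6 x7 x8)) ->
  (forall x1 x2 x4 x5 x6 x7 x8, lin (fun x => F x1 x2 x x4 x5 x6 x7 x8)) ->
  (forall x1 x2 x3 x5 x6 x7 x8, lin (fun x => F x1 x2 x3 x x5 x6 x7 x8)) ->
  (forall x1 x2 x3 x4 x6 x7 x8, lin (fun x => F x1 x2 x3 x4 x x6 x7 x8)) ->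
  (forall x1 x2 x3 x4 x5 x7 x8, lin (fun x => F x1 x2 x3 x4 x5 x x7 x8)) ->
  (forall x1 x2 x3 x4 x5 x6 x8, lin (fun x => F x1 x2 x3 x4 x5 x6 x x8)) ->
  (forall x1 x2 x3 x4 x5 x6 x7, lin (fun x => F x1 x2 x3 x4 x5 x6 x7 x)) ->
  D (fun a1 a2 => D (fun b1 b2 => D (fun k1 k2 => D (fun l1 l2 =>
    D (fun i1 i2 => D (fun j1 j2 => F i1 i2 k2 a2 j1 j2 l2 b2) l1) k1) b1) a1) b) a
  = D (fun a1 a2 => D (fun b1 b2 => D (fun x1 x2 => D (fun y1 y2 =>
    D (fun u1 u2 => D (fun v1 v2 => F a1 u2 x1 u1 b1 v2 y1 v1) y2) x2) b2) a2) b) a.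
Proof.
move=> H1 H2 H3 H4 H5 H6 H7 H8.
transitivity (L4 (fun i1 i2 k2 a2 => L4 (fun j1 j2 l2 b2 => F i1 i2 k2 a2 j1 j2 l2 b2) b) a).
  rewrite /L4; apply: D_ext => a1 a2; rewrite D_exch; apply: D_ext => k1 k2.
  rewrite [RHS]D_exch; apply: D_ext => b1 b2; by rewrite [RHS]D_exch.
transitivity (R4 (fun a1 x1 u1 u2 => R4 (fun b1 y1 v1 v2 => F a1 u2 x1 u1 b1 v2 y1 v1) b) a); last first.
  rewrite /R4; apply: D_ext => a1 a2; rewrite [RHS]D_exch; apply: D_ext => x1 x2.
  rewrite D_exch; apply: D_ext => b1 b2; by rewrite D_exch.
rewrite L4_R4perm; last by split; intros; rewrite /L4; linT.
apply: R4_ext => q o t s; rewrite L4_R4perm //; split; intros; linT.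
Qed.

Lemma D_mul2 (F1 F2 : M -> M -> A) x y :
  D F1 x * D F2 y = D (fun p q => D (fun p' q' => F1 p q * F2 p' q') y) x.
Proof.
rewrite (D_push (h := fun c => c * D F2 y)); last by linT.
apply: D_ext => p q; rewrite (D_push (h := fun c => F1 p q * c)) //; linT.
Qed.


Lemma P2 (r : M -> M -> A) a b : bichar cop eps r ->
  D r (a * b) = D (fun a1 a2 => D (fun b1 b2 => D r a1 * D r b1 * symz cop r a2 b2) b) a.
Proof.
move=> Hr; case: (Hr) => Hb Hu Hm1 Hm2.
rewrite (cop_mul HM Hb).
transitivity (D (fun a1 a2 => D (fun b1 b2 => D (fun d1 d2 => D (fun e1 e2 =>
   D (fun p q => D (fun p' q' => (r p d1 * r q e1) * (r p' d2 * r q' e2)) b1) a1) b2) a2) b) a).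
  apply: D_ext => a1 a2; apply: D_ext => b1 b2.
  rewrite Hm1 (cop_mul HM); last by bilinT.
  by apply: D_ext => d1 d2; apply: D_ext => e1 e2; rewrite !Hm2 D_mul2.
transitivity (B4 (fun p q d1 d2 => B4 (fun p' q' e1 e2 => (r p d1 * r q e1) * (r p' d2 * r q' e2)) b) a).
  rewrite /B4; apply: D_ext => a1 a2.
  rewrite D_exch [RHS]D_exch; apply: D_ext => d1 d2.
  rewrite [RHS]D_exch; apply: D_ext => b1 b2.
  rewrite D_exch; apply: D_ext => p q.
  by rewrite D_exch.
transitivity (B4 (fun x1 x2 u1 u2 => B4 (fun y1 y2 v1 v2 => (r x1 x2 * r y1 y2) * (r u1 v1 * r v2 u2)) b) a); last first.
  rewrite /B4; apply: D_ext => a1 a2.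
  transitivity (D (fun b1 b2 => D (fun x1 x2 => D (fun u1 u2 => D (fun y1 y2 => D (fun v1 v2 =>
     (r x1 x2 * r y1 y2) * (r u1 v1 * r v2 u2)) b2) b1) a2) a1) b); last first.
    apply: D_ext => b1 b2; rewrite /symz /conv /transp D_mul2 D_mul2.
    by apply: D_ext => x1 x2; apply: D_ext => u1 u2; rewrite D_mul2.
  rewrite [RHS]D_exch; apply: D_ext => x1 x2.
  by rewrite [RHS]D_exch.
rewrite B4_mid; last by split; intros; rewrite /B4; linT.
apply: B4_ext => x1 x2 y1 y2.
rewrite B4_sw1; last by split; intros; linT.
rewrite B4_mid; last by split; intros; linT.
rewrite B4_sw2; last by split; intros; linT.
rewrite B4_mid; last by split; intros; linT.
apply: B4_ext => z1 z2 w1 w2; ring.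
Qed.


Lemma ML (r t : M -> M -> A) u v : bichar cop eps r -> bilin t ->
  tens_eq (EQ cop r (bullet cop t u v))
          (bullet cop (conv cop t (symz cop r)) (EQ cop r u) (EQ cop r v)).
Proof.
move=> Hr Ht V f Hf.
have Hb := bichar_bilin Hr.
have Hs : bilin (symz cop r) := bilin_conv Hb (bilin_transp Hb).
have Ht' : bilin (conv cop t (symz cop r)) := bilin_conv Ht Hs.
set t' := conv cop t (symz cop r) in Ht' *.
rewrite (EQ_sumQ (h := f)) //; last by case: Hf.
rewrite (@bullet_sum V (fun m c => D (fun x1 x2 => f x2 (D r x1 * c)) m)).
rewrite bullet_sum.
transitivity (\sum_(p' <- EQ cop r u) \sum_(q <- v) D (fun b1 b2 =>
   D (fun x1 x2 => D (fun y1 y2 => f (x1 * y1) (t' x2 y2 * (p'.2 * (D r b1 * q.2)))) b2) p'.1) q.1); last first.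
  apply: eq_bigr => p' _.
  by rewrite (EQ_sumQ (h := fun n d => D (fun x1 x2 => D (fun y1 y2 => f (x1 * y1) (t' x2 y2 * (p'.2 * d))) n) p'.1)) //; move=> m; linT.
rewrite [RHS]exchange_big /=.
transitivity (\sum_(p <- u) \sum_(q <- v) D (fun a1 a2 => D (fun b1 b2 =>
   D (fun x1 x2 => D (fun y1 y2 => f (x1 * y1) (t' x2 y2 * ((D r a1 * p.2) * (D r b1 * q.2)))) b2) a2) q.1) p.1); last first.
  rewrite exchange_big /=; apply: eq_bigr => q _.
  by rewrite (EQ_sumQ (h := fun m c => D (fun b1 b2 => D (fun x1 x2 => D (fun y1 y2 => f (x1 * y1) (t' x2 y2 * (c * (D r b1 * q.2)))) b2) m) q.1)) //; move=> m; linT.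
apply: eq_bigr => [[a al]] _; apply: eq_bigr => [[b be]] _ /=.
pose F := fun aQ as_ ao at_ bQ bs bo bt =>
  f (ao * bo) ((D r aQ * D r bQ * symz cop r as_ bs) * (t at_ bt * (al * be))).
transitivity (D (fun a1 a2 => D (fun b1 b2 => D (fun x1 x2 => D (fun y1 y2 =>
    D (fun u1 u2 => D (fun v1 v2 => F a1 u2 x1 u1 b1 v2 y1 v1) y2) x2) b2) a2) b) a).
  rewrite -ML_core; try by (intros; rewrite /F; linT).
  apply: D_ext => a1 a2; apply: D_ext => b1 b2.
  rewrite (cop_mul HM); last by bilinT.
  apply: D_ext => k1 k2; apply: D_ext => l1 l2.
  rewrite P2 //.
  rewrite (D_push (h := fun z => f (k2 * l2) (z * (t a2 b2 * (al * be))))); last by linT.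
  apply: D_ext => i1 i2.
  by rewrite (D_push (h := fun z => f (k2 * l2) (z * (t a2 b2 * (al * be))))) //; linT.
apply: D_ext => a1 a2; apply: D_ext => b1 b2; apply: D_ext => x1 x2; apply: D_ext => y1 y2.
rewrite /t' /conv.
rewrite (D_push (h := fun z => f (x1 * y1) (z * ((D r a1 * al) * (D r b1 * be))))); last by linT.
apply: D_ext => u1 u2.
rewrite (D_push (h := fun z => f (x1 * y1) (z * ((D r a1 * al) * (D r b1 * be))))); last by linT.
apply: D_ext => v1 v2; rewrite /F; congr (f _ _); ring.
Qed.


Lemma te_refl (u : seq (M * A)) : tens_eq u u.
Proof. by []. Qed.

Lemma te_sym (u v : seq (M * A)) : tens_eq u v -> tens_eq v u.
Proof. by move=> H V f Hf; rewrite H. Qed.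

Lemma te_trans (u v w : seq (M * A)) : tens_eq u v -> tens_eq v w -> tens_eq u w.
Proof. by move=> H1 H2 V f Hf; rewrite H1 // H2. Qed.

Lemma te_EQ (r : M -> M -> A) u u' : bilin r -> tens_eq u u' -> tens_eq (EQ cop r u) (EQ cop r u').
Proof.
move=> Hr H V f Hf; rewrite !EQ_sum.
apply: (H V (fun m c => D (fun x1 x2 => D (fun y1 y2 => f x2 (r y1 y2 * c)) x1) m)).
bilinT.
Qed.

Lemma te_bullet (t : M -> M -> A) u u' v v' : bilin t -> tens_eq u u' -> tens_eq v v' ->
  tens_eq (bullet cop t u v) (bullet cop t u' v').
Proof.
move=> Ht Hu Hv V f Hf; rewrite !bullet_sum.
transitivity (\sum_(p <- u') \sum_(q <- v)
     D (fun x1 x2 => D (fun y1 y2 => f (x1 * y1) (t x2 y2 * (p.2 * q.2))) q.1) p.1).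
  apply: (Hu V (fun m c => \sum_(q <- v)
     D (fun x1 x2 => D (fun y1 y2 => f (x1 * y1) (t x2 y2 * (c * q.2))) q.1) m)).
  split => y; [apply: (@lin_sumF _ _ _ _ _ (fun q x => D (fun x1 x2 => D (fun y1 y2 => f (x1 * y1) (t x2 y2 * (y * q.2))) q.1) x)) => q; linT
                |apply: (@lin_sumF _ _ _ _ _ (fun q x => D (fun x1 x2 => D (fun y1 y2 => f (x1 * y1) (t x2 y2 * (x * q.2))) q.1) y)) => q; linT].
rewrite exchange_big [RHS]exchange_big /=.
apply: (Hv V (fun m c => \sum_(p <- u')
     D (fun x1 x2 => D (fun y1 y2 => f (x1 * y1) (t x2 y2 * (p.2 * c))) m) p.1)).
split => y; [apply: (@lin_sumF _ _ _ _ _ (fun p x => D (fun x1 x2 => D (fun y1 y2 => f (x1 * y1) (t x2 y2 * (p.2 * y))) x) p.1)) => p; linT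
              |apply: (@lin_sumF _ _ _ _ _ (fun p x => D (fun x1 x2 => D (fun y1 y2 => f (x1 * y1) (t x2 y2 * (p.2 * x))) y) p.1)) => p; linT].
Qed.

Theorem main_sec :
  (forall r : M -> M -> A, bichar cop eps r ->
     (forall u : seq (M * A), tens_eq (EQ cop (binv S r) (EQ cop r u)) u) /\
     (forall u : seq (M * A), tens_eq (EQ cop r (EQ cop (binv S r) u)) u)) /\
  (forall r1 r2 : M -> M -> A, bichar cop eps r1 -> bichar cop eps r2 ->
     forall u v : seq (M * A),
       tens_eq (EQ cop r2 (EQ cop (binv S r1) (bullet cop (symz cop r1) u v)))
               (bullet cop (symz cop r2)
                  (EQ cop r2 (EQ cop (binv S r1) u))
                  (EQ cop r2 (EQ cop (binv S r1) v)))).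
Proof.
have P1 : forall r : M -> M -> A, bichar cop eps r ->
     (forall u : seq (M * A), tens_eq (EQ cop (binv S r) (EQ cop r u)) u) /\
     (forall u : seq (M * A), tens_eq (EQ cop r (EQ cop (binv S r) u)) u).
  move=> r Hr; have Hb := bichar_bilin Hr; have Hi := bilin_binv Hb.
  split=> u; apply: EQ_EQ_id => // a b.
    exact: conv_binv_r.
  exact: conv_binv_l.
split => //.
move=> r1 r2 Hr1 Hr2 u v.
have Hb1 := bichar_bilin Hr1; have Hb2 := bichar_bilin Hr2.
have Hi1 := bilin_binv Hb1.
have Hs1 : bilin (symz cop r1) := bilin_conv Hb1 (bilin_transp Hb1).
have Hs2 : bilin (symz cop r2) := bilin_conv Hb2 (bilin_transp Hb2).
have E1 : conv cop epsA (symz cop r1) = symz cop r1.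
  by apply: functional_extensionality => a; apply: functional_extensionality => b; rewrite conv_epsA.
have E2 : conv cop epsA (symz cop r2) = symz cop r2.
  by apply: functional_extensionality => a; apply: functional_extensionality => b; rewrite conv_epsA.
set w := EQ cop (binv S r1).
set X := bullet cop epsA (w u) (w v).
have H1 : tens_eq (EQ cop r1 X) (bullet cop (symz cop r1) u v).
  apply: te_trans; first exact: (ML _ _ Hr1 bilin_epsA).
  rewrite E1; apply: te_bullet => //; exact: (proj2 (P1 r1 Hr1)).
have H2 : tens_eq X (w (bullet cop (symz cop r1) u v)).
  apply: te_trans; first exact: (te_sym (proj1 (P1 r1 Hr1) X)).
  exact: te_EQ.
apply: te_trans; first exact: (te_EQ Hb2 (te_sym H2)).
apply: te_trans; first exact: (ML _ _ Hr2 bilin_epsA).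
by rewrite E2; apply: te_refl.
Qed.

End Core.

Theorem corollary2p8
  (M : comAlgType Cplx) (cop : M -> seq (M * M)) (eps : M -> Cplx) (S : M -> M)
  (HM : cc_hopf cop eps S) (A : comAlgType Cplx) :
  (forall r : M -> M -> A, bichar cop eps r ->
     (forall u : seq (M * A), tens_eq (EQ cop (binv S r) (EQ cop r u)) u) /\
     (forall u : seq (M * A), tens_eq (EQ cop r (EQ cop (binv S r) u)) u)) /\
  (forall r1 r2 : M -> M -> A, bichar cop eps r1 -> bichar cop eps r2 ->
     forall u v : seq (M * A),
       tens_eq (EQ cop r2 (EQ cop (binv S r1) (bullet cop (symz cop r1) u v)))
               (bullet cop (symz cop r2)
                  (EQ cop r2 (EQ cop (binv S r1) u))
                  (EQ cop r2 (EQ cop (binv S r1) v)))).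
Proof. exact: (main_sec HM A). Qed.
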